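(* Let $\nu_0=0$ (so $\nu_1=1$) and $s,u>0$, $\gamma\ge 0$, and consider the ODE $\dot y=F(y)$ with $F(y)=-y(1-y)\big[s+\gamma(1-y)\big]+u(1-y)$, regarded on $\mathbb R$. Put $\hat u=s$ and, for $\gamma>0$, $\check u=\frac1\gamma\big(\frac{s+\gamma}{2}\big)^2$. (a) If $\gamma=0$, the equilibria are $\bar y_1=1$ and $\bar y_2=u/s$, with $\bar y_1=\bar y_2=1$ if $u=\hat u$. The smaller of the two is always stable; the other one (if distinct) is unstable. (b) Let $\gamma>0$. If $u>\check u$, then $\bar y_1=1$ is the only equilibrium, and it is stable. If $u\le\check u$, the equilibria are $$\bar y_1=1,\qquad \bar y_2=\tfrac12\Big(1+\tfrac s\gamma-\sqrt\sigma\Big),\qquad \bar y_3=\tfrac12\Big(1+\tfrac s\gamma+\sqrt\sigma\Big),\qquad \sigma=\Big(1+\tfrac s\gamma\Big)^2-4\tfrac u\gamma\ge 0.$$ Their positions, together with which of them are stable as equilibria in $[0,1]$, are as follows. - If $u<\hat u$ (any $\gamma>0$): $0<\bar y_2<\bar y_1=1<\bar y_3$; $\bar y_2$ is stable. - If $u=\hat u$ and $\gamma<s$: $1=\bar y_1=\bar y_2<\bar y_3=s/\gamma$; $\bar y_1=\bar y_2$ is stable. - If $u=\hat u$ and $\gamma=s$: $1=\bar y_1=\bar y_2=\bar y_3$, which is stable. - If $u=\hat u$ and $\gamma>s$: $0<\bar y_2=s/\gamma<\bar y_1=\bar y_3=1$; $\bar y_2$ is stable. - If $\hat u<u<\check u$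 and $\gamma<s$: $1=\bar y_1<\bar y_2<\bar y_3$; $\bar y_1$ is stable. - If $\hat u<u<\check u$ and $\gamma>s$: $0<\bar y_2<\bar y_3<\bar y_1=1$; $\bar y_2$ and $\bar y_1$ are stable. - If $u=\check u$ and $\gamma<s$: $1=\bar y_1<\bar y_2=\bar y_3=(\gamma+s)/(2\gamma)$; $\bar y_1$ is stable. - If $u=\check u$ and $\gamma=s$: $1=\bar y_1=\bar y_2=\bar y_3$, which is stable. - If $u=\check u$ and $\gamma>s$: $\frac12<\bar y_2=\bar y_3=(\gamma+s)/(2\gamma)<\bar y_1=1$; $\bar y_1$ is stable.
   Context: ''Stable'' means locally asymptotically stable. The case $\gamma=s$, $\hat u<u<\check u$ cannot occur, because $\hat u=\check u$ when $\gamma=s$; in general $\check u-\hat u=(s-\gamma)^2/(4\gamma)\ge 0$. *)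

(* Defs.v *)
From Stdlib Require Import Reals.
Open Scope R_scope.

Definition Fode (s g u : R) (y : R) : R :=
  - y * (1 - y) * (s + g * (1 - y)) + u * (1 - y).

Definition uhat (s : R) : R := s.
Definition ucheck (s g : R) : R := / g * ((s + g) / 2) ^ 2.
Definition sigma_disc (s g u : R) : R := (1 + s / g) ^ 2 - 4 * (u / g).
Definition ybar2 (s g u : R) : R := / 2 * (1 + s / g - sqrt (sigma_disc s g u)).
Definition ybar3 (s g u : R) : R := / 2 * (1 + s / g + sqrt (sigma_disc s g u)).

Definition I01 (y : R) : Prop := 0 <= y <= 1.
Definition wholeR (y : R) : Prop := True.

Definition is_sol (F : R -> R) (D : R -> Prop) (y : R -> R) : Prop :=
  forall t, 0 <= t -> D (y t) /\ derivable_pt_lim y t (F (y t)).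

Definition lyap_stable (F : R -> R) (D : R -> Prop) (ye : R) : Prop :=
  forall eps, 0 < eps -> exists delta, 0 < delta /\
    forall y, is_sol F D y -> Rabs (y 0 - ye) < delta ->
      forall t, 0 <= t -> Rabs (y t - ye) < eps.

Definition attractive (F : R -> R) (D : R -> Prop) (ye : R) : Prop :=
  exists delta, 0 < delta /\
    forall y, is_sol F D y -> Rabs (y 0 - ye) < delta ->
      forall eps, 0 < eps -> exists T, forall t, T <= t -> Rabs (y t - ye) < eps.

Definition LAS (F : R -> R) (D : R -> Prop) (ye : R) : Prop :=
  D ye /\ F ye = 0 /\ lyap_stable F D ye /\ attractive F D ye.

Definition unstable (F : R -> R) (D : R -> Prop) (ye : R) : Prop :=
  ~ lyap_stable F D ye.

(* Main.v *)
Require Import Defs.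
From Stdlib Require Import Reals.
Open Scope R_scope.
From Stdlib Require Import Lra Ranalysis5 Classical ClassicalEpsilon.
From Coquelicot Require Import Coquelicot.
Open Scope R_scope.

Lemma cont_eps f x : continuity_pt f x -> forall eps, 0 < eps ->
  exists d, 0 < d /\ forall z, Rabs (z - x) < d -> Rabs (f z - f x) < eps.
Proof.
  intros H eps He. destruct (H eps He) as [d [Hd Hz]]. exists d; split; [lra|].
  intros z Hz'. destruct (Req_dec z x) as [->|n].
  - unfold Rminus; rewrite Rplus_opp_r, Rabs_R0; lra.
  - apply Hz. split; [split; [exact I| auto] | exact Hz'].
Qed.

Lemma first_exit (V : R -> R) t1 c : 0 < t1 ->
  (forall t, 0 <= t <= t1 -> continuity_pt V t) -> V 0 < c -> c <= V t1 ->
  exists tau, 0 < tau <= t1 /\ V tau = c /\ forall s, 0 <= s <= tau -> V s <= c.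
Proof.
  intros Ht1 Hc H0 H1.
  set (E := fun t => 0 <= t <= t1 /\ forall s, 0 <= s <= t -> V s <= c).
  assert (HE0 : E 0). { split; [lra|]. intros s Hs. replace s with 0 by lra. lra. }
  assert (Hb : bound E). { exists t1. intros t [Ht _]. lra. }
  destruct (completeness E Hb (ex_intro _ 0 HE0)) as [tau [Hub Hlub]].
  assert (Htau0 : 0 <= tau) by (apply Hub; exact HE0).
  assert (Htau1 : tau <= t1) by (apply Hlub; intros t [Ht _]; lra).
  assert (F1 : forall s, 0 <= s < tau -> V s <= c).
  { intros s Hs. destruct (Rle_or_lt (V s) c) as [h|h]; [exact h|].
    exfalso. assert (tau <= s); [|lra]. apply Hlub. intros t [Ht Hts].
    destruct (Rle_or_lt t s) as [h'|h']; [exact h'|].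
    exfalso. assert (V s <= c) by (apply Hts; lra). lra. }
  assert (F2 : V tau <= c).
  { destruct (Rle_or_lt (V tau) c) as [h|h]; [exact h|]. exfalso.
    destruct (Req_dec tau 0) as [e0|ne0]; [rewrite e0 in h; lra|].
    destruct (cont_eps V tau (Hc tau (conj Htau0 Htau1)) (V tau - c)) as [d [Hd Hdz]]; [lra|].
    set (s := Rmax 0 (tau - d/2)).
    assert (tau > 0) by (destruct Htau0; [lra| congruence]).
    assert (Hs : 0 <= s < tau) by (unfold s, Rmax; destruct Rle_dec; lra).
    assert (Hsd : Rabs (s - tau) < d).
    { unfold s, Rmax; destruct Rle_dec; apply Rabs_def1; lra. }
    specialize (Hdz s Hsd). specialize (F1 s Hs). apply Rabs_def2 in Hdz. destruct Hdz. lra. }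
  assert (F3 : V tau = c).
  { destruct (Rle_lt_or_eq_dec _ _ F2) as [hlt|h]; [|exact h]. exfalso.
    assert (Htt : tau < t1).
    { destruct (Rle_lt_or_eq_dec _ _ Htau1) as [|e]; [auto| subst; lra]. }
    destruct (cont_eps V tau (Hc tau (conj Htau0 Htau1)) (c - V tau)) as [d [Hd Hdz]]; [lra|].
    set (t' := Rmin (tau + d/2) t1).
    assert (Ht' : tau < t' <= t1) by (unfold t', Rmin; destruct Rle_dec; lra).
    assert (HEt : E t').
    { split. lra.
      intros s Hs. destruct (Rlt_or_le s tau) as [h1|h1]. apply F1; lra.
      assert (Hsd : Rabs (s - tau) < d).
      { apply Rabs_def1; unfold t', Rmin in Hs; destruct Rle_dec; lra. }
      specialize (Hdz s Hsd). apply Rabs_def2 in Hdz. destruct Hdz. lra. }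
    assert (t' <= tau) by (apply Hub; auto). lra. }
  exists tau. split; [|split; [exact F3|]].
  - split; [|lra]. destruct (Rle_lt_or_eq_dec _ _ Htau0) as [|e]; [lra| rewrite <- e in F3; lra].
  - intros s Hs. destruct (Rle_lt_or_eq_dec _ _ (proj2 Hs)) as [|e]; [apply F1; lra| subst; lra].
Qed.

Lemma sol_deriv F D y t : is_sol F D y -> 0 <= t -> derivable_pt_lim y t (F (y t)).
Proof. intros H Ht. apply (H t Ht). Qed.

Lemma sol_cont F D y t : is_sol F D y -> 0 <= t -> continuity_pt y t.
Proof. intros H Ht. apply derivable_continuous_pt. exists (F (y t)). apply (H t Ht). Qed.

Lemma mvt_sol (y : R -> R) F e a b : 0 <= a < b ->
  (forall t, a <= t <= b -> derivable_pt_lim y t (F (y t))) ->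
  exists xi, a <= xi <= b /\
    (y b - e)^2 - (y a - e)^2 = 2 * (y xi - e) * F (y xi) * (b - a).
Proof.
  intros Hab Hd.
  assert (HV : forall t, a <= t <= b ->
    derivable_pt_lim (fun t => (y t - e)^2) t (2 * (y t - e) * F (y t))).
  { intros t Ht.
    assert (H1 : derivable_pt_lim (fun t => y t - e) t (F (y t) - 0)).
    { apply (derivable_pt_lim_minus y (fun _ => e)). apply Hd; auto. apply derivable_pt_lim_const. }
    assert (H2 := derivable_pt_lim_mult _ _ _ _ _ H1 H1).
    replace (2 * (y t - e) * F (y t)) with ((F (y t) - 0) * (y t - e) + (y t - e) * (F (y t) - 0)) by ring.
    eapply derivable_pt_lim_ext; [|exact H2]. intros x. unfold mult_real_fct, mult_fct, minus_fct; simpl; ring. }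
  destruct (MVT_gen (fun t => (y t - e)^2) a b (fun t => 2 * (y t - e) * F (y t))) as [xi [Hxi Heq]].
  - rewrite Rmin_left, Rmax_right by lra. intros x Hx. apply is_derive_Reals, HV. lra.
  - rewrite Rmin_left, Rmax_right by lra. intros x Hx. apply derivable_continuous_pt.
    exists (2 * (y x - e) * F (y x)). apply HV; lra.
  - rewrite Rmin_left, Rmax_right in Hxi by lra. exists xi. split; [exact Hxi| exact Heq].
Qed.

Lemma abs_lt_sq a r : 0 < r -> a^2 < r^2 -> Rabs a < r.
Proof. intros Hr H. apply Rabs_def1; nra. Qed.

Lemma sq_abs a : Rabs a ^ 2 = a ^ 2.
Proof. unfold Rabs; destruct Rcase_abs; ring. Qed.

Lemma stay F e r y : 0 < r ->
  (forall z, 0 <= z <= 1 -> z <> e -> Rabs (z - e) < r -> (z - e) * F z < 0) ->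
  is_sol F I01 y -> forall m, 0 < m <= r -> Rabs (y 0 - e) < m ->
  forall t, 0 <= t -> Rabs (y t - e) < m.
Proof.
  intros Hr Hs Hy m Hm H0 t1 Ht1.
  destruct (Rlt_or_le (Rabs (y t1 - e)) m) as [h|h]; [exact h|]. exfalso.
  set (V := fun t => (y t - e)^2).
  assert (Hpos : 0 < t1).
  { destruct (Rle_lt_or_eq_dec _ _ Ht1) as [|E]; [auto| subst; lra]. }
  set (c := ((y 0 - e)^2 + m^2)/2).
  assert (HV0 : V 0 < c).
  { unfold V, c. rewrite <- (sq_abs (y 0 - e)). assert (0 <= Rabs (y 0 - e)) by apply Rabs_pos. nra. }
  assert (HV1 : c <= V t1).
  { unfold V, c. rewrite <- (sq_abs (y 0 - e)), <- (sq_abs (y t1 - e)).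
    assert (0 <= Rabs (y 0 - e)) by apply Rabs_pos. nra. }
  destruct (first_exit V t1 c Hpos) as [tau [Htau [Hc Hle]]]; auto.
  { intros t Ht. unfold V. apply continuity_pt_filterlim.
    apply (continuous_comp (fun t => y t - e) (fun x => x^2)).
    - apply continuity_pt_filterlim. apply continuity_pt_minus.
      apply (sol_cont F I01 y t Hy); lra. apply continuity_pt_const; intros a b; auto.
    - apply continuity_pt_filterlim. reg. }
  destruct (mvt_sol y F e 0 tau) as [xi [Hxi Heq]]; [lra| intros; apply (Hy t); lra |].
  assert (HVxi : V xi <= c) by (apply Hle; lra).
  assert (Hcm : c < m^2).
  { unfold c. rewrite <- (sq_abs (y 0 - e)). assert (0 <= Rabs (y 0 - e)) by apply Rabs_pos. nra. }
  assert (Hr2 : Rabs (y xi - e) < r) by (apply abs_lt_sq; [lra| unfold V in HVxi; nra]).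
  destruct (Req_dec (y xi) e) as [E|NE].
  - rewrite E in Heq. unfold V in Hc, HV0. replace (e - e) with 0 in Heq by ring. lra.
  - assert (Hn := Hs (y xi) (proj1 (Hy xi (proj1 Hxi))) NE Hr2).
    unfold V in Hc, HV0. assert (0 < tau) by lra. nra.
Qed.

Lemma shift_sol F D y T : 0 <= T -> is_sol F D y -> is_sol F D (fun t => y (t + T)).
Proof.
  intros HT Hy t Ht. split; [apply (Hy (t + T)); lra|].
  assert (H1 : derivable_pt_lim (fun t => t + T) t 1).
  { replace 1 with (1 + 0) by ring. apply derivable_pt_lim_plus.
    apply derivable_pt_lim_id. apply derivable_pt_lim_const. }
  assert (H2 := derivable_pt_lim_comp _ _ _ _ _ H1 (proj2 (Hy (t + T) ltac:(lra)))).
  rewrite Rmult_1_r in H2. exact H2.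
Qed.

Lemma pos_lb h a b : (forall z, a <= z <= b -> continuity_pt h z) ->
  (forall z, a <= z <= b -> 0 < h z) -> exists mu, 0 < mu /\ forall z, a <= z <= b -> mu <= h z.
Proof.
  intros Hc Hp. destruct (Rle_or_lt a b) as [hab|hab].
  - destruct (continuity_ab_min h a b hab Hc) as [x [Hx Hxab]].
    exists (h x). split; [apply Hp; auto| auto].
  - exists 1. split; [lra| intros z Hz; lra].
Qed.

Lemma GL F e r : 0 <= e <= 1 -> F e = 0 -> (forall z, continuity_pt F z) -> 0 < r ->
  (forall z, 0 <= z <= 1 -> z <> e -> Rabs (z - e) < r -> (z - e) * F z < 0) ->
  LAS F I01 e.
Proof.
  intros He HF Hc Hr Hs. split; [exact He|]. split; [exact HF|]. split.
  - intros eps Heps. exists (Rmin eps r). split; [apply Rmin_case; lra|].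
    intros y Hy H0 t Ht.
    assert (Hm : 0 < Rmin eps r <= r) by (split; [apply Rmin_case; lra | apply Rmin_r]).
    assert (H := stay F e r y Hr Hs Hy _ Hm H0 t Ht).
    assert (Rmin eps r <= eps) by apply Rmin_l. lra.
  - exists (r/2). split; [lra|]. intros y Hy H0 eps Heps.
    set (ep := Rmin eps (r/2)).
    assert (Hep : 0 < ep <= r/2) by (unfold ep; split; [apply Rmin_case; lra| apply Rmin_r]).
    assert (Hepe : ep <= eps) by apply Rmin_l.
    assert (Hin : forall t, 0 <= t -> Rabs (y t - e) < r/2).
    { apply (stay F e r y Hr Hs Hy); auto. lra. }
    assert (Hex : exists T, 0 <= T /\ Rabs (y T - e) < ep).
    { apply NNPP. intro Hno.
      assert (Hall : forall t, 0 <= t -> ep <= Rabs (y t - e)).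
      { intros t Ht. destruct (Rlt_or_le (Rabs (y t - e)) ep) as [h|h]; auto.
        exfalso; apply Hno; exists t; auto. }
      set (h := fun z => - ((z - e) * F z)).
      assert (Hhc : forall z, continuity_pt h z).
      { intros z. unfold h. apply continuity_pt_opp. apply continuity_pt_mult; [reg| apply Hc]. }
      assert (Hhp : forall z, 0 <= z <= 1 -> z <> e -> Rabs (z - e) < r -> 0 < h z).
      { intros z Hz Hne Hzr. unfold h. assert (H := Hs z Hz Hne Hzr). lra. }
      destruct (pos_lb h (Rmax 0 (e - r/2)) (e - ep)) as [mu1 [Hmu1 Hl1]].
      { intros; apply Hhc. }
      { intros z Hz. assert (0 <= z) by (eapply Rle_trans; [apply Rmax_l| apply Hz]).
        assert (e - r/2 <= z) by (eapply Rle_trans; [apply Rmax_r| apply Hz]).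
        apply Hhp; [lra| lra| apply Rabs_def1; lra]. }
      destruct (pos_lb h (e + ep) (Rmin 1 (e + r/2))) as [mu2 [Hmu2 Hl2]].
      { intros; apply Hhc. }
      { intros z Hz. assert (z <= 1) by (eapply Rle_trans; [apply Hz| apply Rmin_l]).
        assert (z <= e + r/2) by (eapply Rle_trans; [apply Hz| apply Rmin_r]).
        apply Hhp; [lra| lra| apply Rabs_def1; lra]. }
      set (mu := Rmin mu1 mu2).
      assert (Hmu : 0 < mu) by (unfold mu; apply Rmin_case; lra).
      assert (Hlb : forall t, 0 <= t -> mu <= h (y t)).
      { intros t Ht. assert (Hyt := proj1 (Hy t Ht)). assert (H1 := Hall t Ht). assert (H2 := Hin t Ht).
        unfold I01 in Hyt.
        destruct (Rle_or_lt (y t) e) as [hl|hl].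
        - rewrite Rabs_left1 in H1, H2 by lra.
          apply Rle_trans with mu1; [apply Rmin_l|]. apply Hl1. split; [apply Rmax_case; lra| lra].
        - rewrite Rabs_right in H1, H2 by lra.
          apply Rle_trans with mu2; [apply Rmin_r|]. apply Hl2. split; [lra| apply Rmin_case; lra]. }
      set (T := (y 0 - e)^2 / mu + 1).
      assert (HT : 0 < T). { unfold T. assert (0 <= (y 0 - e)^2 / mu). 
        { apply Rdiv_le_0_compat; [apply pow2_ge_0| lra]. } lra. }
      destruct (mvt_sol y F e 0 T) as [xi [Hxi Heq]]; [lra| intros; apply (Hy t); lra|].
      assert (Hx := Hlb xi (proj1 Hxi)). unfold h in Hx.
      assert (HTmu : T * mu = (y 0 - e)^2 + mu) by (unfold T; field; lra).
      assert (0 <= (y T - e)^2) by apply pow2_ge_0. nra. }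
    destruct Hex as [T [HT HyT]].
    exists T. intros t Ht.
    assert (Hsh := shift_sol F I01 y T HT Hy).
    assert (Hm : 0 < ep <= r) by lra.
    assert (H := stay F e r _ Hr Hs Hsh ep Hm ltac:(simpl; rewrite Rplus_0_l; exact HyT) (t - T) ltac:(lra)).
    simpl in H. replace (t - T + T) with t in H by ring. lra.
Qed.

Ltac mm := repeat match goal with
  | |- context[Rmin ?a ?b] => let H := fresh in destruct (Rle_or_lt a b) as [H|H];
      [rewrite (Rmin_left a b) by lra | rewrite (Rmin_right a b) by lra]
  | |- context[Rmax ?a ?b] => let H := fresh in destruct (Rle_or_lt a b) as [H|H];
      [rewrite (Rmax_right a b) by lra | rewrite (Rmax_left a b) by lra]
  | H0 : context[Rmin ?a ?b] |- _ => let H := fresh in destruct (Rle_or_lt a b) as [H|H];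
      [rewrite (Rmin_left a b) in H0 by lra | rewrite (Rmin_right a b) in H0 by lra]
  | H0 : context[Rmax ?a ?b] |- _ => let H := fresh in destruct (Rle_or_lt a b) as [H|H];
      [rewrite (Rmax_right a b) in H0 by lra | rewrite (Rmax_left a b) in H0 by lra]
  end; repeat match goal with H : _ /\ _ |- _ => destruct H end; repeat split; lra.

Lemma inv_cont (T y : R -> R) a b t0 r :
  0 < r ->
  (forall t, Rabs (t - t0) < r -> a < y t < b /\ T (y t) = t) ->
  (forall u v, a < u -> u < v -> v < b -> T u < T v) ->
  forall eps, 0 < eps -> exists d, 0 < d /\ forall t, Rabs (t - t0) < d -> Rabs (y t - y t0) < eps.
Proof.
  intros Hr Hinv Hinc eps Heps.
  assert (H0 : a < y t0 < b /\ T (y t0) = t0) by (apply Hinv; rewrite Rminus_eq_0, Rabs_R0; lra).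
  set (z0 := y t0) in *. destruct H0 as [Hz0 HT0].
  set (e' := Rmin eps (Rmin (z0 - a) (b - z0)) / 2).
  assert (He' : 0 < e' /\ e' < eps /\ e' < z0 - a /\ e' < b - z0).
  { destruct Hz0. unfold e'. mm. }
  destruct He' as [He1 [He2 [He3 He4]]].
  assert (Hup : t0 < T (z0 + e')) by (rewrite <- HT0 at 1; apply Hinc; lra).
  assert (Hlo : T (z0 - e') < t0) by (rewrite <- HT0; apply Hinc; lra).
  exists (Rmin r (Rmin (T (z0 + e') - t0) (t0 - T (z0 - e')))).
  split; [mm|].
  intros t Ht.
  assert (Ht' : Rabs (t - t0) < r /\ t - t0 < T (z0 + e') - t0 /\ t0 - t < t0 - T (z0 - e')).
  { revert Ht. unfold Rmin; repeat destruct Rle_dec; intro Ht; apply Rabs_def2 in Ht; destruct Ht;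
    repeat split; try apply Rabs_def1; lra. }
  destruct Ht' as [Htr [H1 H2]].
  destruct (Hinv t Htr) as [Hyt HTt].
  apply Rabs_def1.
  - destruct (Rlt_or_le (y t - z0) eps) as [h|h]; [exact h|]. exfalso.
    destruct (Rle_lt_or_eq_dec (z0 + e') (y t)) as [h'|h']; [lra| |].
    + assert (T (z0 + e') < T (y t)) by (apply Hinc; lra). lra.
    + rewrite <- h' in HTt. lra.
  - destruct (Rlt_or_le (-eps) (y t - z0)) as [h|h]; [exact h|]. exfalso.
    destruct (Rle_lt_or_eq_dec (y t) (z0 - e')) as [h'|h']; [lra| |].
    + assert (T (y t) < T (z0 - e')) by (apply Hinc; lra). lra.
    + rewrite h' in HTt. lra.
Qed.

Lemma inv_deriv (T y : R -> R) a b t0 r d :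
  0 < r -> 0 < d ->
  (forall t, Rabs (t - t0) < r -> a < y t < b /\ T (y t) = t) ->
  (forall u v, a < u -> u < v -> v < b -> T u < T v) ->
  derivable_pt_lim T (y t0) d ->
  derivable_pt_lim y t0 (/ d).
Proof.
  intros Hr Hd Hinv Hinc HT eps Heps.
  set (eps1 := Rmin (d/2) (eps * d^2 / 2)).
  assert (He1 : 0 < eps1 /\ eps1 <= d/2 /\ eps1 <= eps * d^2/2).
  { unfold eps1. split; [apply Rmin_case; [lra| assert (0 < d^2) by (apply pow_lt; lra); nra]| split; [apply Rmin_l| apply Rmin_r]]. }
  destruct (HT eps1 (proj1 He1)) as [d1 Hd1].
  destruct (inv_cont T y a b t0 r Hr Hinv Hinc d1 (cond_pos d1)) as [d2 [Hd2 Hc]].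
  assert (Hpos : 0 < Rmin d2 r) by (apply Rmin_case; lra).
  exists (mkposreal _ Hpos). simpl. intros h Hh0 Hh.
  assert (Hh' : Rabs h < d2 /\ Rabs h < r).
  { revert Hh; unfold Rmin; destruct Rle_dec; intro; split; lra. }
  destruct Hh' as [Hh2 Hhr].
  assert (Hth : Rabs (t0 + h - t0) < r) by (replace (t0 + h - t0) with h by ring; exact Hhr).
  assert (Hth2 : Rabs (t0 + h - t0) < d2) by (replace (t0 + h - t0) with h by ring; exact Hh2).
  destruct (Hinv _ Hth) as [_ HTh].
  assert (H00 : Rabs (t0 - t0) < r) by (rewrite Rminus_eq_0, Rabs_R0; lra).
  destruct (Hinv _ H00) as [_ HT0].
  set (k := y (t0 + h) - y t0).
  assert (Hk : Rabs k < d1) by (apply Hc; exact Hth2).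
  assert (Hk0 : k <> 0).
  { intro E. unfold k in E. assert (y (t0 + h) = y t0) by lra.
    rewrite H in HTh. lra. }
  specialize (Hd1 k Hk0 Hk).
  replace (y t0 + k) with (y (t0 + h)) in Hd1 by (unfold k; ring).
  rewrite HTh, HT0 in Hd1. replace (t0 + h - t0) with h in Hd1 by ring.
  fold k.
  set (q := h / k) in *.
  assert (Hq : Rabs (q - d) < eps1) by exact Hd1.
  apply Rabs_def2 in Hq. destruct Hq as [Hq1 Hq2].
  assert (Hqp : d/2 < q) by lra.
  replace (k / h - / d) with ((d - q) / (q * d)).
  2:{ unfold q. field. repeat split; auto; apply Rgt_not_eq; lra. }
  apply Rabs_def1.
  - apply Rmult_lt_reg_r with (q * d); [nra|]. unfold Rdiv. rewrite Rmult_assoc, Rinv_l by nra. nra.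
  - apply Rmult_lt_reg_r with (q * d); [nra|]. unfold Rdiv. rewrite Rmult_assoc, Rinv_l by nra. nra.
Qed.

Lemma GE F H zl z0 p : zl < z0 < p ->
  (forall z, continuity_pt F z) -> (forall z, continuity_pt H z) ->
  (forall z, zl <= z < p -> 0 < F z) ->
  (forall z, F z = (p - z) * H z) ->
  exists y : R -> R, y 0 = z0 /\
    (forall t, 0 <= t -> z0 <= y t < p /\ derivable_pt_lim y t (F (y t))) /\
    (forall m, m < p -> exists t, 0 <= t /\ m < y t).
Proof.
  intros Hz HFc HHc HFp HFH. destruct Hz as [Hz1 Hz2].
  set (f := fun w => / F w).
  assert (Hfpos : forall w, zl <= w < p -> 0 < f w).
  { intros w Hw. unfold f. apply Rinv_0_lt_compat, HFp; auto. }
  assert (Hfc : forall w, zl <= w < p -> continuous f w).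
  { intros w Hw. apply continuity_pt_filterlim. unfold f.
    apply (continuity_pt_inv F); [apply HFc| apply Rgt_not_eq, HFp; auto]. }
  assert (Hex : forall a b, zl <= a < p -> zl <= b < p -> ex_RInt f a b).
  { intros a b Ha Hb. apply (@ex_RInt_continuous R_CompleteNormedModule). intros z Hz'. apply Hfc.
    destruct Hz' as [Hz'1 Hz'2]. split.
    - mm.
    - mm. }
  set (T := fun z => RInt f z0 z).
  assert (HTd : forall z, zl < z < p -> derivable_pt_lim T z (f z)).
  { intros z Hz'. apply is_derive_Reals. apply (is_derive_RInt (V := R_CompleteNormedModule) f T z0 z).
    - assert (Hr : 0 < Rmin (z - zl) (p - z)) by mm.
      exists (mkposreal _ Hr). intros b Hb. change (Rabs (b - z) < Rmin (z - zl) (p - z)) in Hb.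
      assert (Hb' : zl < b < p).
      { apply Rabs_def2 in Hb. mm. }
      apply RInt_correct. apply Hex; lra.
    - apply Hfc; lra. }
  assert (HTinc : forall u v, zl < u -> u < v -> v < p -> T u < T v).
  { intros u v Hu Huv Hv. destruct (MVT_gen T u v f) as [c [Hc Heq]].
    - rewrite Rmin_left, Rmax_right by lra; intros x Hx; apply is_derive_Reals, HTd; lra.
    - rewrite Rmin_left, Rmax_right by lra; intros x Hx; apply derivable_continuous_pt.
      exists (f x); apply HTd; lra.
    - rewrite Rmin_left, Rmax_right in Hc by lra.
      assert (0 < f c) by (apply Hfpos; lra).
      assert (0 < f c * (v - u)) by (apply Rmult_lt_0_compat; lra). lra. }
  assert (HTinj : forall u v, zl < u < p -> zl < v < p -> T u = T v -> u = v).
  { intros u v Hu Hv E. destruct (Rtotal_order u v) as [h|[h|h]]; auto.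
    - assert (T u < T v) by (apply HTinc; lra). lra.
    - assert (T v < T u) by (apply HTinc; lra). lra. }
  assert (HT0 : T z0 = 0) by (unfold T; rewrite RInt_point; reflexivity).
  destruct (continuity_ab_min (fun w => - H w) z0 p) as [wM [HwM _]].
  { lra. } { intros; apply continuity_pt_opp, HHc. }
  set (M := Rmax 1 (H wM)).
  assert (HM : 0 < M) by (unfold M; mm).
  assert (HFM : forall w, z0 <= w < p -> F w <= M * (p - w)).
  { intros w Hw. rewrite HFH. assert (H w <= M).
    { assert (- H wM <= - H w) by (apply HwM; lra). assert (H wM <= M) by (unfold M; apply Rmax_r). lra. }
    apply Rmult_le_compat_l with (r := p - w) in H0; lra. }
  assert (HTlb : forall z, z0 <= z < p -> (ln (p - z0) - ln (p - z)) / M <= T z).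
  { intros z Hzz.
    assert (Hg : is_RInt (fun w => / (M * (p - w))) z0 z ((ln (p - z0) - ln (p - z)) / M)).
    { replace ((ln (p - z0) - ln (p - z)) / M) with
        (minus ((fun w => - ln (p - w) / M) z) ((fun w => - ln (p - w) / M) z0)).
      2:{ unfold minus, plus, opp; simpl; field; lra. }
      apply (is_RInt_derive (V := R_CompleteNormedModule) (fun w => - ln (p - w) / M) (fun w => / (M * (p - w)))).
      - intros x Hx. rewrite Rmin_left, Rmax_right in Hx by lra. auto_derive. lra. field. split; lra.
      - intros x Hx. rewrite Rmin_left, Rmax_right in Hx by lra. apply continuity_pt_filterlim.
        apply (continuity_pt_inv (fun w => M * (p - w))). reg.
        apply Rgt_not_eq. apply Rmult_lt_0_compat; lra. }
    unfold T. rewrite <- (is_RInt_unique _ _ _ _ Hg). apply RInt_le.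
    - lra.
    - exists ((ln (p - z0) - ln (p - z)) / M). exact Hg.
    - apply Hex; lra.
    - intros x Hx. unfold f. apply Rinv_le_contravar. apply HFp; lra. apply HFM; lra. }
  set (zm := (zl + z0) / 2).
  assert (HTzm : T zm < 0) by (rewrite <- HT0; apply HTinc; unfold zm; lra).
  assert (Hsurj : forall t, T zm < t -> exists z, zm <= z < p /\ T z = t).
  { intros t Ht.
    set (ex := exp (- M * (Rabs t + 1))).
    assert (Hex1 : 0 < ex < 1).
    { assert (0 <= Rabs t) by apply Rabs_pos.
      assert (0 < M * (Rabs t + 1)) by (apply Rmult_lt_0_compat; lra).
      assert (Hneg : - M * (Rabs t + 1) < 0) by (rewrite Ropp_mult_distr_l_reverse; lra).
      pose proof (exp_increasing _ _ Hneg) as Hx. rewrite exp_0 in Hx.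
      unfold ex. split; [apply exp_pos| exact Hx]. }
    set (z1 := p - (p - z0) * ex).
    assert (Hz1r : z0 <= z1 < p).
    { unfold z1. split; nra. }
    assert (HTz1 : t < T z1).
    { apply Rlt_le_trans with ((ln (p - z0) - ln (p - z1)) / M); [|apply HTlb; lra].
      replace (p - z1) with ((p - z0) * ex) by (unfold z1; ring).
      rewrite ln_mult by lra. unfold ex. rewrite ln_exp.
      replace ((ln (p - z0) - (ln (p - z0) + - M * (Rabs t + 1))) / M) with (Rabs t + 1) by (field; lra).
      assert (t <= Rabs t) by apply RRle_abs. lra. }
    destruct (IVT_interv (fun z => T z - t) zm z1) as [z [Hzr Hzt]].
    - intros a Ha. apply continuity_pt_minus. apply derivable_continuous_pt.
      exists (f a). apply HTd. unfold zm in Ha. lra. apply continuity_pt_const. intros x y; auto.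
    - unfold zm; lra.
    - lra.
    - lra.
    - exists z. split; [lra|]. lra. }
  set (y := fun t => epsilon (inhabits 0) (fun z => zm <= z < p /\ T z = t)).
  assert (Hy : forall t, T zm < t -> zm <= y t < p /\ T (y t) = t).
  { intros t Ht. unfold y. apply (epsilon_spec (inhabits 0) (fun z => zm <= z < p /\ T z = t)).
    apply Hsurj; auto. }
  assert (Hzm : zl < zm < z0) by (unfold zm; split; lra).
  exists y. split; [|split].
  - destruct (Hy 0 HTzm) as [Hr HT]. apply HTinj; [lra| lra| rewrite HT, HT0; auto].
  - intros t Ht. destruct (Hy t ltac:(lra)) as [Hr HTt]. split; [split|].
    + destruct (Rlt_or_le (y t) z0) as [h|h]; [|exact h]. exfalso.
      assert (T (y t) < T z0) by (apply HTinc; lra). lra.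
    + lra.
    + assert (Hd := inv_deriv T y zl p t (t - T zm) (f (y t))).
      unfold f in Hd. rewrite Rinv_inv in Hd. apply Hd.
      * lra.
      * apply Hfpos; lra.
      * intros t' Ht'. apply Rabs_def2 in Ht'. destruct Ht' as [Ht1' Ht2'].
        destruct (Hy t' ltac:(lra)) as [Hr' HT']. split; [lra| exact HT'].
      * exact HTinc.
      * apply HTd; lra.
  - intros m Hm. set (zs := (Rmax m z0 + p) / 2).
    assert (Hzs : z0 < zs < p /\ m < zs) by (unfold zs; mm).
    destruct Hzs as [[Hzs1 Hzs2] Hzs3].
    exists (T zs). split.
    + rewrite <- HT0. left. apply HTinc; lra.
    + assert (T zm < T zs) by (apply HTinc; lra).
      destruct (Hy (T zs) H0) as [Hr HT]. assert (y (T zs) = zs) by (apply HTinj; lra).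
      lra.
Qed.

Lemma GE_dec F H zl z0 p : p < z0 < zl ->
  (forall z, continuity_pt F z) -> (forall z, continuity_pt H z) ->
  (forall z, p < z <= zl -> F z < 0) ->
  (forall z, F z = (z - p) * H z) ->
  exists y : R -> R, y 0 = z0 /\
    (forall t, 0 <= t -> p < y t <= z0 /\ derivable_pt_lim y t (F (y t))) /\
    (forall m, p < m -> exists t, 0 <= t /\ y t < m).
Proof.
  intros Hz HFc HHc HFn HFH.
  destruct (GE (fun z => - F (- z)) (fun z => - H (- z)) (- zl) (- z0) (- p)) as [w [Hw0 [Hw Hwm]]].
  - lra.
  - intros z. apply continuity_pt_opp. apply (continuity_pt_comp (fun z => - z) F); [reg| apply HFc].
  - intros z. apply continuity_pt_opp. apply (continuity_pt_comp (fun z => - z) H); [reg| apply HHc].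
  - intros z Hz'. assert (F (- z) < 0) by (apply HFn; lra). lra.
  - intros z. rewrite HFH. ring.
  - exists (fun t => - w t). split; [|split].
    + rewrite Hw0; ring.
    + intros t Ht. destruct (Hw t Ht) as [Hr Hd]. split; [lra|].
      replace (F (- w t)) with (- (- F (- w t))) by ring.
      apply derivable_pt_lim_opp. exact Hd.
    + intros m Hm. destruct (Hwm (- m) ltac:(lra)) as [t [Ht Hlt]]. exists t. split; [auto| lra].
Qed.

Lemma GU_inc F H (D : R -> Prop) e p : e < p ->
  (forall z, continuity_pt F z) -> (forall z, continuity_pt H z) ->
  (forall z, e < z < p -> 0 < F z) ->
  (forall z, F z = (p - z) * H z) ->
  (forall z, e < z < p -> D z) ->
  ~ lyap_stable F D e.
Proof.
  intros Hep HFc HHc HFp HFH HD Hst.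
  destruct (Hst ((p - e) / 2) ltac:(lra)) as [d [Hd Hs]].
  set (a := Rmin d ((p - e) / 2)).
  assert (Ha : 0 < a <= d /\ a <= (p - e)/2) by (unfold a; mm).
  destruct (GE F H (e + a/4) (e + a/2) p) as [y [Hy0 [Hy Hym]]].
  - lra.
  - exact HFc.
  - exact HHc.
  - intros z Hz. apply HFp; lra.
  - exact HFH.
  - assert (Hsol : is_sol F D y).
    { intros t Ht. destruct (Hy t Ht) as [Hr Hd']. split; [apply HD; lra| exact Hd']. }
    destruct (Hym (e + (p - e)/2) ltac:(lra)) as [t [Ht Hlt]].
    assert (H0 : Rabs (y 0 - e) < d) by (rewrite Hy0; apply Rabs_def1; lra).
    assert (H1 := Hs y Hsol H0 t Ht).
    apply Rabs_def2 in H1. lra.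
Qed.

Lemma GU_dec F H (D : R -> Prop) e p : p < e ->
  (forall z, continuity_pt F z) -> (forall z, continuity_pt H z) ->
  (forall z, p < z < e -> F z < 0) ->
  (forall z, F z = (z - p) * H z) ->
  (forall z, p < z < e -> D z) ->
  ~ lyap_stable F D e.
Proof.
  intros Hep HFc HHc HFn HFH HD Hst.
  destruct (Hst ((e - p) / 2) ltac:(lra)) as [d [Hd Hs]].
  set (a := Rmin d ((e - p) / 2)).
  assert (Ha : 0 < a <= d /\ a <= (e - p)/2) by (unfold a; mm).
  destruct (GE_dec F H (e - a/4) (e - a/2) p) as [y [Hy0 [Hy Hym]]].
  - lra.
  - exact HFc.
  - exact HHc.
  - intros z Hz. apply HFn; lra.
  - exact HFH.
  - assert (Hsol : is_sol F D y).
    { intros t Ht. destruct (Hy t Ht) as [Hr Hd']. split; [apply HD; lra| exact Hd']. }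
    destruct (Hym (e - (e - p)/2) ltac:(lra)) as [t [Ht Hlt]].
    assert (H0 : Rabs (y 0 - e) < d) by (rewrite Hy0; apply Rabs_def1; lra).
    assert (H1 := Hs y Hsol H0 t Ht).
    apply Rabs_def2 in H1. lra.
Qed.

Lemma Fcont s g u z : continuity_pt (Fode s g u) z.
Proof. unfold Fode. reg. Qed.

Lemma Ffact s g u z : Fode s g u z = (1 - z) * (u - z * (s + g * (1 - z))).
Proof. unfold Fode. ring. Qed.

Lemma LAS1 s g u r : 0 < r ->
  (forall z, 0 <= z < 1 -> 1 - z < r -> 0 < u - z * (s + g * (1 - z))) ->
  LAS (Fode s g u) I01 1.
Proof.
  intros Hr HQ. apply (GL _ 1 r).
  - unfold I01; lra.
  - rewrite Ffact. ring.
  - intros; apply Fcont.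
  - exact Hr.
  - intros z Hz Hne Hzr. rewrite Ffact.
    assert (Hz1 : z < 1) by (destruct Hz as [_ [h|h]]; [auto| congruence]).
    assert (Hq := HQ z (conj (proj1 Hz) Hz1) ltac:(apply Rabs_def2 in Hzr; lra)).
    replace ((z - 1) * ((1 - z) * (u - z * (s + g * (1 - z)))))
      with (- ((1 - z) * (1 - z) * (u - z * (s + g * (1 - z))))) by ring.
    assert (0 < (1 - z) * (1 - z) * (u - z * (s + g * (1 - z)))).
    { apply Rmult_lt_0_compat; [apply Rmult_lt_0_compat; lra| exact Hq]. }
    lra.
Qed.

Lemma LAS1_gt s g u : 0 < s -> 0 <= g -> s < u -> LAS (Fode s g u) I01 1.
Proof.
  intros Hs Hg Hu. apply (LAS1 s g u ((u - s) / (g + 1))).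
  - apply Rdiv_lt_0_compat; lra.
  - intros z Hz Hzr.
    assert (Hgr : g * (1 - z) < u - s).
    { assert (g * (1 - z) <= g * ((u - s) / (g + 1))) by (apply Rmult_le_compat_l; lra).
      replace (g * ((u - s) / (g + 1))) with ((u - s) - (u - s) / (g + 1)) in H by (field; lra).
      assert (0 < (u - s) / (g + 1)) by (apply Rdiv_lt_0_compat; lra). lra. }
    assert (s * z <= s) by nra.
    assert (g * z * (1 - z) <= g * (1 - z)) by (assert (0 <= g * (1 - z)) by nra; nra).
    nra.
Qed.

Lemma LAS1_eq s g u : 0 < s -> 0 <= g -> g <= s -> u = s -> LAS (Fode s g u) I01 1.
Proof.
  intros Hs Hg Hgs Hu. subst u. apply (LAS1 s g s 1); [lra|].
  intros z Hz _.
  replace (s - z * (s + g * (1 - z))) with ((1 - z) * (s * (1 - z) + z * (s - g))) by ring.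
  apply Rmult_lt_0_compat; [lra|]. nra.
Qed.

Lemma part_a s u : 0 < s -> 0 < u ->
     (forall y, Fode s 0 u y = 0 <-> y = 1 \/ y = u / s) /\
     (u = uhat s -> u / s = 1) /\
     LAS (Fode s 0 u) I01 (Rmin 1 (u / s)) /\
     (u / s <> 1 ->
        unstable (Fode s 0 u) wholeR (Rmax 1 (u / s)) /\
        (I01 (Rmax 1 (u / s)) -> unstable (Fode s 0 u) I01 (Rmax 1 (u / s)))).
Proof.
  intros Hs Hu.
  assert (Ha : 0 < u / s) by (apply Rdiv_lt_0_compat; lra).
  assert (Hua : u = s * (u / s)) by (field; lra).
  set (a := u / s) in *. clearbody a.
  assert (HF : forall z, Fode s 0 u z = s * (1 - z) * (a - z)).
  { intros z. rewrite Ffact, Hua. ring. }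
  split; [|split; [|split]].
  - intros y. rewrite HF. split.
    + intros H. apply Rmult_integral in H. destruct H as [H|H].
      * apply Rmult_integral in H. destruct H; [lra| left; lra].
      * right; lra.
    + intros [H|H]; subst; ring.
  - unfold uhat. intros E. rewrite E in Hua. 
    assert (s * (a - 1) = 0) by lra. apply Rmult_integral in H. lra.
  - destruct (Rle_or_lt 1 a) as [h|h].
    + rewrite Rmin_left by lra. destruct (Rle_lt_or_eq_dec _ _ h) as [h'|h'].
      * apply LAS1_gt; [lra| lra|]. rewrite Hua. nra.
      * apply LAS1_eq; lra || (rewrite Hua, <- h'; ring).
    + rewrite Rmin_right by lra. apply (GL _ a (1 - a)).
      * unfold I01; lra.
      * rewrite HF; ring.
      * intros; apply Fcont.
      * lra.
      * intros z Hz Hne Hzr. apply Rabs_def2 in Hzr. rewrite HF.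
        replace ((z - a) * (s * (1 - z) * (a - z))) with (- (s * (1 - z) * ((z - a) * (z - a)))) by ring.
        assert (0 < (z - a) * (z - a)).
        { destruct (Rlt_or_le z a); [nra|]. assert (a < z) by (destruct H; [auto| congruence]). nra. }
        assert (0 < s * (1 - z) * ((z - a) * (z - a))).
        { apply Rmult_lt_0_compat; [apply Rmult_lt_0_compat; lra| auto]. }
        lra.
  - intros Hne. destruct (Rlt_or_le a 1) as [h|h].
    + rewrite Rmax_left by lra.
      assert (forall D : R -> Prop, (forall z, a < z < 1 -> D z) -> unstable (Fode s 0 u) D 1).
      { intros D HD. apply (GU_dec _ (fun z => - s * (1 - z)) D 1 a); auto.
        - intros; apply Fcont.
        - intros; reg.
        - intros z Hz. rewrite HF. assert (0 < s * (1 - z) * (z - a)).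
          { apply Rmult_lt_0_compat; [apply Rmult_lt_0_compat|]; lra. } nra.
        - intros z. rewrite HF. ring. }
      split; [apply H; intros; exact I| intros _; apply H; unfold I01; intros; lra].
    + assert (h' : 1 < a) by (destruct h; [auto| congruence]).
      rewrite Rmax_right by lra. split.
      * apply (GU_dec _ (fun z => - (s * (a - z))) wholeR a 1); auto.
        -- intros; apply Fcont.
        -- intros; reg.
        -- intros z Hz. rewrite HF. assert (0 < s * (z - 1) * (a - z)).
           { apply Rmult_lt_0_compat; [apply Rmult_lt_0_compat|]; lra. } nra.
        -- intros z. rewrite HF. ring.
        -- intros; exact I.
      * unfold I01. intros. lra.
Qed.

Lemma zero4 g a b c : g * a * b * c = 0 -> g <> 0 -> a = 0 \/ b = 0 \/ c = 0.
Proof.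
  intros H Hg. apply Rmult_integral in H. destruct H as [H|H]; [|auto].
  apply Rmult_integral in H. destruct H as [H|H]; [|auto].
  apply Rmult_integral in H. destruct H as [H|H]; [congruence| auto].
Qed.

Lemma sq_pos a : a <> 0 -> 0 < a * a.
Proof. intros H. destruct (Rlt_or_le a 0); [nra|]. assert (0 < a) by (destruct H0; [auto| congruence]). nra. Qed.


Lemma eqs (s g u y2 y3 : R) (Hg : 0 < g) (Hfac : forall z, Fode s g u z = g * (1 - z) * (z - y2) * (z - y3)) y : Fode s g u y = 0 -> y = 1 \/ y = y2 \/ y = y3.
Proof.
  rewrite Hfac. intros H. apply zero4 in H; [|lra]. destruct H as [H|[H|H]]; [left|right;left|right;right]; lra.
Qed.

Lemma ConfA (s g u y2 y3 : R) (Hg : 0 < g) (Hfac : forall z, Fode s g u z = g * (1 - z) * (z - y2) * (z - y3)) : 0 < y2 < 1 -> 1 <= y3 -> forall y, LAS (Fode s g u) I01 y <-> y = y2.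
Proof.
  intros H2 H3 y. split.
  - intros [HD [HF [Hst _]]]. unfold I01 in HD.
    destruct (eqs s g u y2 y3 Hg Hfac y HF) as [E|[E|E]]; auto; exfalso.
    + subst y. revert Hst. apply (GU_dec _ (fun z => g * (1 - z) * (z - y3)) I01 1 y2).
      * lra.
      * intros; apply Fcont.
      * intros; reg.
      * intros z Hz. rewrite Hfac. assert (0 < g * (1 - z) * (z - y2) * (y3 - z)).
        { repeat apply Rmult_lt_0_compat; lra. } nra.
      * intros z. rewrite Hfac. ring.
      * unfold I01. intros; lra.
    + assert (Hy1 : y = 1) by lra. rewrite Hy1 in Hst. revert Hst.
      apply (GU_dec _ (fun z => g * (1 - z) * (z - y3)) I01 1 y2).
      * lra.
      * intros; apply Fcont.
      * intros; reg.
      * intros z Hz. rewrite Hfac. assert (0 < g * (1 - z) * (z - y2) * (y3 - z)).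
        { repeat apply Rmult_lt_0_compat; lra. } nra.
      * intros z. rewrite Hfac. ring.
      * unfold I01. intros; lra.
  - intros ->. apply (GL _ y2 (1 - y2)).
    + unfold I01; lra.
    + rewrite Hfac; ring.
    + intros; apply Fcont.
    + lra.
    + intros z Hz Hne Hzr. apply Rabs_def2 in Hzr. rewrite Hfac.
      assert (0 < (z - y2) * (z - y2)) by (apply sq_pos; intro; apply Hne; lra).
      assert (0 < g * (1 - z) * ((z - y2) * (z - y2)) * (y3 - z)).
      { destruct Hzr. apply Rmult_lt_0_compat; [apply Rmult_lt_0_compat; [apply Rmult_lt_0_compat; lra| auto] | lra]. }
      replace ((z - y2) * (g * (1 - z) * (z - y2) * (z - y3)))
        with (- (g * (1 - z) * ((z - y2) * (z - y2)) * (y3 - z))) by ring. lra.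
Qed.

Lemma ConfB (s g u y2 y3 : R) (Hg : 0 < g) (Hfac : forall z, Fode s g u z = g * (1 - z) * (z - y2) * (z - y3)) : 1 <= y2 -> 1 <= y3 -> LAS (Fode s g u) I01 1 ->
  forall y, LAS (Fode s g u) I01 y <-> y = 1.
Proof.
  intros H2 H3 H1 y. split.
  - intros [HD [HF _]]. unfold I01 in HD. destruct (eqs s g u y2 y3 Hg Hfac y HF) as [E|[E|E]]; lra.
  - intros ->. exact H1.
Qed.

Lemma ConfD (s g u y2 y3 : R) (Hg : 0 < g) (Hfac : forall z, Fode s g u z = g * (1 - z) * (z - y2) * (z - y3)) : 0 < y2 -> y2 < y3 -> y3 < 1 -> LAS (Fode s g u) I01 1 ->
  forall y, LAS (Fode s g u) I01 y <-> y = y2 \/ y = 1.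
Proof.
  intros H2 H23 H3 H1 y. split.
  - intros [HD [HF [Hst _]]]. destruct (eqs s g u y2 y3 Hg Hfac y HF) as [E|[E|E]]; auto. exfalso.
    subst y. revert Hst. apply (GU_inc _ (fun z => g * (z - y2) * (z - y3)) I01 y3 1).
    + lra.
    + intros; apply Fcont.
    + intros; reg.
    + intros z Hz. rewrite Hfac. repeat apply Rmult_lt_0_compat; lra.
    + intros z. rewrite Hfac. ring.
    + unfold I01. intros; lra.
  - intros [->| ->]; [|exact H1]. apply (GL _ y2 (y3 - y2)).
    + unfold I01; lra.
    + rewrite Hfac; ring.
    + intros; apply Fcont.
    + lra.
    + intros z Hz Hne Hzr. apply Rabs_def2 in Hzr. rewrite Hfac.
      assert (0 < (z - y2) * (z - y2)) by (apply sq_pos; intro; apply Hne; lra).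
      assert (0 < g * (1 - z) * ((z - y2) * (z - y2)) * (y3 - z)).
      { destruct Hzr. apply Rmult_lt_0_compat; [apply Rmult_lt_0_compat; [apply Rmult_lt_0_compat; lra| auto] | lra]. }
      replace ((z - y2) * (g * (1 - z) * (z - y2) * (z - y3)))
        with (- (g * (1 - z) * ((z - y2) * (z - y2)) * (y3 - z))) by ring. lra.
Qed.

Lemma ConfE (s g u y2 y3 : R) (Hg : 0 < g) (Hfac : forall z, Fode s g u z = g * (1 - z) * (z - y2) * (z - y3)) : 0 < y2 < 1 -> y2 = y3 -> LAS (Fode s g u) I01 1 ->
  forall y, LAS (Fode s g u) I01 y <-> y = 1.
Proof.
  intros H2 H23 H1 y. split.
  - intros [HD [HF [Hst _]]]. destruct (eqs s g u y2 y3 Hg Hfac y HF) as [E|[E|E]]; auto; exfalso;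
    subst y; revert Hst; apply (GU_inc _ (fun z => g * (z - y2) * (z - y3)) I01 _ 1);
    try lra; try (intros; apply Fcont); try (intros; reg);
    try (intros z; rewrite Hfac; ring); try (unfold I01; intros; lra);
    intros z Hz; rewrite Hfac; repeat apply Rmult_lt_0_compat; lra.
  - intros ->. exact H1.
Qed.

Lemma sqlt a b : 0 <= a -> 0 <= b -> a * a < b * b -> a < b.
Proof. intros. nra. Qed.
Lemma sqeq a b : 0 <= a -> 0 <= b -> a * a = b * b -> a = b.
Proof. intros. nra. Qed.

Lemma part_b s u g : 0 < s -> 0 < u -> 0 < g ->
     (ucheck s g < u ->
        (forall y, Fode s g u y = 0 <-> y = 1) /\ LAS (Fode s g u) I01 1) /\
     (u <= ucheck s g ->
        0 <= sigma_disc s g u /\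
        (forall y, Fode s g u y = 0 <->
           y = 1 \/ y = ybar2 s g u \/ y = ybar3 s g u) /\
        (u < uhat s ->
           0 < ybar2 s g u /\ ybar2 s g u < 1 /\ 1 < ybar3 s g u /\
           (forall y, LAS (Fode s g u) I01 y <-> y = ybar2 s g u)) /\
        (u = uhat s -> g < s ->
           ybar2 s g u = 1 /\ 1 < ybar3 s g u /\ ybar3 s g u = s / g /\
           (forall y, LAS (Fode s g u) I01 y <-> y = 1)) /\
        (u = uhat s -> g = s ->
           ybar2 s g u = 1 /\ ybar3 s g u = 1 /\
           (forall y, LAS (Fode s g u) I01 y <-> y = 1)) /\
        (u = uhat s -> s < g ->
           0 < ybar2 s g u /\ ybar2 s g u = s / g /\ ybar2 s g u < 1 /\
           ybar3 s g u = 1 /\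
           (forall y, LAS (Fode s g u) I01 y <-> y = ybar2 s g u)) /\
        (uhat s < u -> u < ucheck s g -> g < s ->
           1 < ybar2 s g u /\ ybar2 s g u < ybar3 s g u /\
           (forall y, LAS (Fode s g u) I01 y <-> y = 1)) /\
        (uhat s < u -> u < ucheck s g -> s < g ->
           0 < ybar2 s g u /\ ybar2 s g u < ybar3 s g u /\ ybar3 s g u < 1 /\
           (forall y, LAS (Fode s g u) I01 y <-> y = ybar2 s g u \/ y = 1)) /\
        (u = ucheck s g -> g < s ->
           1 < ybar2 s g u /\ ybar2 s g u = ybar3 s g u /\
           ybar2 s g u = (g + s) / (2 * g) /\
           (forall y, LAS (Fode s g u) I01 y <-> y = 1)) /\
        (u = ucheck s g -> g = s ->
           ybar2 s g u = 1 /\ ybar3 s g u = 1 /\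
           (forall y, LAS (Fode s g u) I01 y <-> y = 1)) /\
        (u = ucheck s g -> s < g ->
           / 2 < ybar2 s g u /\ ybar2 s g u = ybar3 s g u /\
           ybar2 s g u = (g + s) / (2 * g) /\ ybar2 s g u < 1 /\
           (forall y, LAS (Fode s g u) I01 y <-> y = 1))).
Proof.
  intros Hs Hu Hg.
  assert (Hsk : s = (s / g) * g) by (field; lra).
  assert (Huv : u = (u / g) * g) by (field; lra).
  revert Hs Hu Hsk Huv. generalize (s / g) (u / g). intros k v Hs Hu Hsk Huv. subst s u.
  assert (Hk : 0 < k) by nra. assert (Hv : 0 < v) by nra.
  assert (Huc : ucheck (k * g) g = v * g + g * ((1 + k)^2 - 4 * v) / 4) by (unfold ucheck; field; lra).
  assert (Hkg : k * g / g = k) by (field; lra).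
  assert (Hsig : sigma_disc (k * g) g (v * g) = (1 + k)^2 - 4 * v) by (unfold sigma_disc; field; lra).
  assert (Hlt : forall a b, a * g < b * g <-> a < b).
  { intros a b; split; intro; [apply (Rmult_lt_reg_r g); lra| apply Rmult_lt_compat_r; lra]. }
  assert (Heq : forall a b, a * g = b * g <-> a = b).
  { intros a b; split; intro; [apply (Rmult_eq_reg_r g); lra| subst; auto]. }
  assert (Hucv : forall w, v * g + g * w / 4 = v * g + g * ((w / 4 + v) - v)) by (intros; field).
  unfold uhat. rewrite Huc.
  split.
  - intros Hgt. assert (H4 : (1 + k)^2 - 4 * v < 0).
    { destruct (Rlt_or_le ((1 + k)^2 - 4 * v) 0) as [h|h]; [auto|].
      assert (0 <= g * ((1 + k)^2 - 4 * v) / 4) by (apply Rmult_le_pos; [apply Rmult_le_pos|]; lra). lra. }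
    split.
    + intros y. rewrite Ffact. split.
      * intros H. apply Rmult_integral in H. destruct H as [H|H]; [lra|]. exfalso.
        assert (0 <= (2 * y - (1 + k))^2) by apply pow2_ge_0. assert (0 < y^2 - (1 + k) * y + v) by nra.
        assert (0 < g * (y^2 - (1 + k) * y + v)) by (apply Rmult_lt_0_compat; lra).
        replace (v * g - y * (k * g + g * (1 - y))) with (g * (y^2 - (1 + k) * y + v)) in H by ring. lra.
      * intros ->. ring.
    + apply LAS1_gt; [nra| lra|]. apply Hlt. assert (0 <= (1 - k)^2) by apply pow2_ge_0. nra.
  - intros Hle. assert (H4 : 0 <= (1 + k)^2 - 4 * v).
    { destruct (Rlt_or_le ((1 + k)^2 - 4 * v) 0) as [h|h]; [|auto].
      assert (g * ((1 + k)^2 - 4 * v) / 4 < 0).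
      { unfold Rdiv. assert (g * ((1 + k)^2 - 4 * v) < 0) by nra. nra. } lra. }
    set (Q := sqrt (sigma_disc (k * g) g (v * g))).
    assert (HQ0 : 0 <= Q) by apply sqrt_pos.
    assert (HQQ : Q * Q = (1 + k)^2 - 4 * v) by (unfold Q; rewrite sqrt_sqrt; [auto| rewrite Hsig; auto]).
    assert (Hy2 : ybar2 (k * g) g (v * g) = (1 + k - Q) / 2) by (unfold ybar2; fold Q; rewrite Hkg; field).
    assert (Hy3 : ybar3 (k * g) g (v * g) = (1 + k + Q) / 2) by (unfold ybar3; fold Q; rewrite Hkg; field).
    assert (Hfac : forall z, Fode (k * g) g (v * g) z =
       g * (1 - z) * (z - ybar2 (k * g) g (v * g)) * (z - ybar3 (k * g) g (v * g))).
    { intros z. rewrite Hy2, Hy3. unfold Fode.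
      transitivity (g * (1 - z) * ((z - (1 + k) / 2)^2 - Q * Q / 4)).
      - rewrite HQQ. field.
      - field. }
    split; [rewrite Hsig; auto|].
    split.
    { intros y; split; [apply (eqs _ _ _ _ _ Hg Hfac)|].
      intros [ E | [ E | E ] ]; rewrite E; rewrite Hfac; ring. }
    split.
    {
      intros Hus. apply Hlt in Hus.
      assert (HQa : Q < 1 + k) by (apply sqlt; nra).
      assert (HQb : 1 - k < Q).
      { destruct (Rlt_or_le (1 - k) 0); [lra|]. apply sqlt; nra. }
      assert (HQc : k - 1 < Q).
      { destruct (Rlt_or_le (k - 1) 0); [lra|]. apply sqlt; nra. }
      split; [rewrite Hy2; lra| split; [rewrite Hy2; lra| split; [rewrite Hy3; lra|]]].
      apply (ConfA _ _ _ _ _ Hg Hfac); rewrite ?Hy2, ?Hy3; lra. }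
    split.
    {
      intros Hus Hgs. assert (Hvk : v = k) by (apply Heq; auto). assert (Hk1 : 1 < k) by nra.
      assert (HQ : Q = k - 1) by (apply sqeq; [lra| lra| rewrite HQQ, Hvk; ring]).
      assert (E2 : ybar2 (k * g) g (v * g) = 1) by (rewrite Hy2, HQ; field).
      assert (E3 : ybar3 (k * g) g (v * g) = k) by (rewrite Hy3, HQ; field).
      split; [auto| split; [rewrite E3; lra| split; [rewrite E3; auto|]]].
      apply (ConfB _ _ _ _ _ Hg Hfac); [lra| lra|]. apply LAS1_eq; lra. }
    split.
    {
      intros Hus Hgs. assert (Hvk : v = k) by (apply Heq; auto). assert (Hk1 : k = 1) by nra.
      assert (HQ : Q = 0) by (apply sqeq; [lra| lra| rewrite HQQ, Hvk, Hk1; ring]).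
      assert (E2 : ybar2 (k * g) g (v * g) = 1) by (rewrite Hy2, HQ, Hk1; field).
      assert (E3 : ybar3 (k * g) g (v * g) = 1) by (rewrite Hy3, HQ, Hk1; field).
      split; [auto| split; [auto|]].
      apply (ConfB _ _ _ _ _ Hg Hfac); [lra| lra|]. apply LAS1_eq; lra. }
    split.
    {
      intros Hus Hgs. assert (Hvk : v = k) by (apply Heq; auto). assert (Hk1 : k < 1) by nra.
      assert (HQ : Q = 1 - k) by (apply sqeq; [lra| lra| rewrite HQQ, Hvk; ring]).
      assert (E2 : ybar2 (k * g) g (v * g) = k) by (rewrite Hy2, HQ; field).
      assert (E3 : ybar3 (k * g) g (v * g) = 1) by (rewrite Hy3, HQ; field).
      split; [lra| split; [rewrite E2; auto| split; [lra| split; [auto|]]]].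
      apply (ConfA _ _ _ _ _ Hg Hfac); lra. }
    split.
    {
      intros Hsu Huc' Hgs. apply Hlt in Hsu. assert (Hk1 : 1 < k) by nra.
      assert (Hsp : 0 < (1 + k)^2 - 4 * v).
      { assert (0 < g * ((1 + k)^2 - 4 * v)) by lra. nra. }
      assert (HQp : 0 < Q) by (destruct HQ0 as [h|h]; [auto| rewrite <- h in HQQ; lra]).
      assert (HQa : Q < k - 1) by (apply sqlt; nra).
      split; [rewrite Hy2; lra| split; [rewrite Hy2, Hy3; lra|]].
      apply (ConfB _ _ _ _ _ Hg Hfac); [rewrite Hy2; lra| rewrite Hy3; lra|].
      apply LAS1_gt; nra. }
    split.
    {
      intros Hsu Huc' Hgs. apply Hlt in Hsu. assert (Hk1 : k < 1) by nra.
      assert (Hsp : 0 < (1 + k)^2 - 4 * v).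
      { assert (0 < g * ((1 + k)^2 - 4 * v)) by lra. nra. }
      assert (HQp : 0 < Q) by (destruct HQ0 as [h|h]; [auto| rewrite <- h in HQQ; lra]).
      assert (HQa : Q < 1 - k) by (apply sqlt; nra).
      split; [rewrite Hy2; lra| split; [rewrite Hy2, Hy3; lra| split; [rewrite Hy3; lra|]]].
      apply (ConfD _ _ _ _ _ Hg Hfac); [rewrite Hy2; lra| rewrite Hy2, Hy3; lra| rewrite Hy3; lra|].
      apply LAS1_gt; nra. }
    assert (HQz : v * g = v * g + g * ((1 + k)^2 - 4 * v) / 4 -> Q = 0 /\ 4 * v = (1 + k)^2).
    { intros E. assert (g * ((1 + k)^2 - 4 * v) = 0) by lra.
      apply Rmult_integral in H. destruct H as [H|H]; [lra|].
      split; [|lra]. apply sqeq; [lra| lra| rewrite HQQ; lra]. }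
    assert (Hgs2 : (g + k * g) / (2 * g) = (1 + k) / 2) by (field; lra).
    split.
    { intros Huc' Hgs. destruct (HQz Huc') as [HQ Hv4]. assert (Hk1 : 1 < k) by nra.
      assert (E2 : ybar2 (k * g) g (v * g) = (1 + k) / 2) by (rewrite Hy2, HQ; field).
      assert (E3 : ybar3 (k * g) g (v * g) = (1 + k) / 2) by (rewrite Hy3, HQ; field).
      split; [rewrite E2; lra| split; [rewrite E2, E3; auto| split; [rewrite E2, Hgs2; auto|]]].
      apply (ConfB _ _ _ _ _ Hg Hfac); [lra| lra|].
      apply LAS1_gt; [nra| lra|]. apply Hlt. nra. }
    split.
    { intros Huc' Hgs. destruct (HQz Huc') as [HQ Hv4]. assert (Hk1 : k = 1) by nra.
      assert (E2 : ybar2 (k * g) g (v * g) = 1) by (rewrite Hy2, HQ, Hk1; field).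
      assert (E3 : ybar3 (k * g) g (v * g) = 1) by (rewrite Hy3, HQ, Hk1; field).
      split; [auto| split; [auto|]].
      apply (ConfB _ _ _ _ _ Hg Hfac); [lra| lra|].
      apply LAS1_eq; nra. }
    { intros Huc' Hgs. destruct (HQz Huc') as [HQ Hv4]. assert (Hk1 : k < 1) by nra.
      assert (E2 : ybar2 (k * g) g (v * g) = (1 + k) / 2) by (rewrite Hy2, HQ; field).
      assert (E3 : ybar3 (k * g) g (v * g) = (1 + k) / 2) by (rewrite Hy3, HQ; field).
      split; [rewrite E2; lra| split; [rewrite E2, E3; auto| split; [rewrite E2, Hgs2; auto| split; [rewrite E2; lra|]]]].
      apply (ConfE _ _ _ _ _ Hg Hfac); [lra| rewrite E2, E3; auto|].
      apply LAS1_gt; [nra| lra|]. apply Hlt. nra. }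
Qed.

Theorem proposition2p2 (s u g : R) (hs : 0 < s) (hu : 0 < u) (hg : 0 <= g) :
  (* (a) gamma = 0 *)
  (g = 0 ->
     (forall y, Fode s g u y = 0 <-> y = 1 \/ y = u / s) /\
     (u = uhat s -> u / s = 1) /\
     LAS (Fode s g u) I01 (Rmin 1 (u / s)) /\
     (u / s <> 1 ->
        unstable (Fode s g u) wholeR (Rmax 1 (u / s)) /\
        (I01 (Rmax 1 (u / s)) -> unstable (Fode s g u) I01 (Rmax 1 (u / s))))) /\
  (* (b) gamma > 0 *)
  (0 < g ->
     (ucheck s g < u ->
        (forall y, Fode s g u y = 0 <-> y = 1) /\ LAS (Fode s g u) I01 1) /\
     (u <= ucheck s g ->
        0 <= sigma_disc s g u /\
        (forall y, Fode s g u y = 0 <->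
           y = 1 \/ y = ybar2 s g u \/ y = ybar3 s g u) /\
        (u < uhat s ->
           0 < ybar2 s g u /\ ybar2 s g u < 1 /\ 1 < ybar3 s g u /\
           (forall y, LAS (Fode s g u) I01 y <-> y = ybar2 s g u)) /\
        (u = uhat s -> g < s ->
           ybar2 s g u = 1 /\ 1 < ybar3 s g u /\ ybar3 s g u = s / g /\
           (forall y, LAS (Fode s g u) I01 y <-> y = 1)) /\
        (u = uhat s -> g = s ->
           ybar2 s g u = 1 /\ ybar3 s g u = 1 /\
           (forall y, LAS (Fode s g u) I01 y <-> y = 1)) /\
        (u = uhat s -> s < g ->
           0 < ybar2 s g u /\ ybar2 s g u = s / g /\ ybar2 s g u < 1 /\
           ybar3 s g u = 1 /\
           (forall y, LAS (Fode s g u) I01 y <-> y = ybar2 s g u)) /\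
        (uhat s < u -> u < ucheck s g -> g < s ->
           1 < ybar2 s g u /\ ybar2 s g u < ybar3 s g u /\
           (forall y, LAS (Fode s g u) I01 y <-> y = 1)) /\
        (uhat s < u -> u < ucheck s g -> s < g ->
           0 < ybar2 s g u /\ ybar2 s g u < ybar3 s g u /\ ybar3 s g u < 1 /\
           (forall y, LAS (Fode s g u) I01 y <-> y = ybar2 s g u \/ y = 1)) /\
        (u = ucheck s g -> g < s ->
           1 < ybar2 s g u /\ ybar2 s g u = ybar3 s g u /\
           ybar2 s g u = (g + s) / (2 * g) /\
           (forall y, LAS (Fode s g u) I01 y <-> y = 1)) /\
        (u = ucheck s g -> g = s ->
           ybar2 s g u = 1 /\ ybar3 s g u = 1 /\
           (forall y, LAS (Fode s g u) I01 y <-> y = 1)) /\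
        (u = ucheck s g -> s < g ->
           / 2 < ybar2 s g u /\ ybar2 s g u = ybar3 s g u /\
           ybar2 s g u = (g + s) / (2 * g) /\ ybar2 s g u < 1 /\
           (forall y, LAS (Fode s g u) I01 y <-> y = 1)))).
Proof.
  split.
  - intros Hg0. subst g. apply part_a; auto.
  - intros Hg. apply part_b; auto.
Qed.
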